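(* Let $\sigma:\mathbb{R}\to\mathbb{R}$ be an increasing odd homeomorphism. The monoid generated by $h_\sigma$ and $v_\sigma$ and the monoid generated by $h_\sigma^{-1}$ and $v_\sigma^{-1}$ are both free (on the respective two generators).
   Context: $h_\sigma(x,y)=(x+\sigma^{-1}(y),y)$ and $v_\sigma(x,y)=(x,\sigma(x)+y)$ are bijections of $\mathbb{R}^2$; the monoid operation is composition. *)

(* Defs.v *)
From Stdlib Require Import Reals List.
Open Scope R_scope.

Definition h_sig (sinv : R -> R) (p : R * R) : R * R :=
  (fst p + sinv (snd p), snd p).

Definition v_sig (s : R -> R) (p : R * R) : R * R :=
  (fst p, s (fst p) + snd p).

(* Evaluation of a word over the two-letter alphabet {true, false}
   (true = a, false = b) as the composite map in the monoid of
   self-maps under composition: [c1; ...; cn] |-> g_c1 o ... o g_cn. *)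
Definition word_eval {T : Type} (a b : T -> T) (w : list bool) : T -> T :=
  fold_right (fun (c : bool) (f : T -> T) => fun x : T => (if c then a else b) (f x)) (fun x => x) w.

(* The monoid generated by a and b is free on a and b: the canonical
   monoid morphism from the free monoid on two letters is injective. *)
Definition free_on2 {T : Type} (a b : T -> T) : Prop :=
  forall w1 w2 : list bool, word_eval a b w1 = word_eval a b w2 -> w1 = w2.

Definition inc_odd_homeo (s sinv : R -> R) : Prop :=
  (forall x, sinv (s x) = x) /\ (forall y, s (sinv y) = y) /\
  continuity s /\ continuity sinv /\
  (forall x y, x < y -> s x < s y) /\
  (forall x, s (- x) = - s x).

(* Main.v *)
Require Import Defs.
From Stdlib Require Import Reals List Lra.
Open Scope R_scope.

Lemma we_nil {T : Type} (a b : T -> T) x : word_eval a b nil x = x.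
Proof. reflexivity. Qed.
Lemma we_cons {T : Type} (a b : T -> T) c w x :
  word_eval a b (c :: w) x = (if c then a else b) (word_eval a b w x).
Proof. reflexivity. Qed.

Lemma pingpong {T : Type} (a b : T -> T) (P Ha Hb : T -> Prop) (p0 : T) :
  (forall x y, a x = a y -> x = y) -> (forall x y, b x = b y -> x = y) ->
  P p0 -> ~ Ha p0 -> ~ Hb p0 ->
  (forall q, P q -> P (a q) /\ Ha (a q)) ->
  (forall q, P q -> P (b q) /\ Hb (b q)) ->
  (forall q, Ha q -> Hb q -> False) -> free_on2 a b.
Proof.
  intros ia ib P0 na nb Pa Pb dis.
  assert (HP : forall w, P (word_eval a b w p0)).
  { induction w as [|c w IH]; [exact P0|]. rewrite we_cons.
    destruct c; [apply Pa|apply Pb]; exact IH. }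
  intros w1 w2 E. assert (E0 := f_equal (fun f => f p0) E). clear E. simpl in E0.
  revert w2 E0; induction w1 as [|c w1 IH]; intros [|d w2] E0.
  - reflexivity.
  - exfalso. rewrite we_nil, we_cons in E0. destruct d.
    + apply na. rewrite E0. apply Pa, HP.
    + apply nb. rewrite E0. apply Pb, HP.
  - exfalso. rewrite we_nil, we_cons in E0. destruct c.
    + apply na. rewrite <- E0. apply Pa, HP.
    + apply nb. rewrite <- E0. apply Pb, HP.
  - rewrite !we_cons in E0. destruct c, d.
    + f_equal. apply IH. apply ia. exact E0.
    + exfalso. apply (dis (a (word_eval a b w1 p0))).
      * apply Pa, HP.
      * rewrite E0. apply Pb, HP.
    + exfalso. apply (dis (a (word_eval a b w2 p0))).
      * apply Pa, HP.
      * rewrite <- E0. apply Pb, HP.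
    + f_equal. apply IH. apply ib. exact E0.
Qed.

Theorem lemma1 (s sinv : R -> R) (hinv vinv : R * R -> R * R) :
  inc_odd_homeo s sinv ->
  (forall p, hinv (h_sig sinv p) = p) -> (forall p, h_sig sinv (hinv p) = p) ->
  (forall p, vinv (v_sig s p) = p) -> (forall p, v_sig s (vinv p) = p) ->
  free_on2 (h_sig sinv) (v_sig s) /\ free_on2 hinv vinv.
Proof.
  intros [sK [sinvK [_ [_ [mono odd]]]]] h1 h2 v1 v2.
  assert (s0 : s 0 = 0). { assert (H := odd 0). replace (-0) with 0 in H by lra. lra. }
  assert (sinvpos : forall y, 0 < y -> 0 < sinv y).
  { intros y Hy. destruct (Rle_or_lt (sinv y) 0) as [H|H]; [|exact H].
    exfalso. destruct H as [H|H].
    - apply mono in H. rewrite sinvK, s0 in H. lra.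
    - rewrite <- (sinvK y), H, s0 in Hy. lra. }
  assert (s1 : 0 < s 1) by (rewrite <- s0; apply mono; lra).
  split.
  - apply (pingpong _ _ (fun p => 0 < fst p /\ 0 < snd p)
             (fun p => s (fst p) > snd p) (fun p => snd p > s (fst p)) (1, s 1)).
    + intros x y E. rewrite <- (h1 x), <- (h1 y), E. reflexivity.
    + intros x y E. rewrite <- (v1 x), <- (v1 y), E. reflexivity.
    + simpl; lra.
    + simpl; lra.
    + simpl; lra.
    + intros [x y] [Hx Hy]; simpl in *. assert (H := sinvpos y Hy).
      split; [lra|]. rewrite <- (sinvK y) at 2. apply mono. lra.
    + intros [x y] [Hx Hy]; simpl in *. assert (0 < s x) by (rewrite <- s0; apply mono; lra).
      lra.
    + intros q; lra.
  - assert (hE : forall p, hinv p = (fst p - sinv (snd p), snd p)).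
    { intros p. assert (H := h2 p). destruct (hinv p) as [x y]. rewrite <- H.
      unfold h_sig; simpl. f_equal; lra. }
    assert (vE : forall p, vinv p = (fst p, snd p - s (fst p))).
    { intros p. assert (H := v2 p). destruct (vinv p) as [x y]. rewrite <- H.
      unfold v_sig; simpl. f_equal; lra. }
    apply (pingpong _ _ (fun p => fst p < 0 /\ 0 < snd p)
             (fun p => - s (fst p) > snd p) (fun p => snd p > - s (fst p)) (-1, s 1)).
    + intros x y E. rewrite <- (h2 x), <- (h2 y), E. reflexivity.
    + intros x y E. rewrite <- (v2 x), <- (v2 y), E. reflexivity.
    + simpl; lra.
    + simpl. assert (Hm := odd 1). replace (- (1)) with (-1) in Hm by lra. lra.
    + simpl. assert (Hm := odd 1). replace (- (1)) with (-1) in Hm by lra. lra.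
    + intros [x y] [Hx Hy]; rewrite hE; simpl in *. assert (H := sinvpos y Hy).
      split; [lra|]. rewrite <- (sinvK y) at 2. rewrite <- odd. apply mono. lra.
    + intros [x y] [Hx Hy]; rewrite vE; simpl in *.
      assert (s x < 0) by (rewrite <- s0; apply mono; lra). lra.
    + intros q; lra.
Qed.
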